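(* In the setting described in the context, suppose that $(\mathrm{Id}_V\otimes Y)(Y\otimes \mathrm{Id}_V)w-qw\in\Upsilon^{(3)}$ for all $w\in V\otimes I_2$. Then for all $x,y\in V$ the following identity holds in $\bigwedge^2V^*$: $$\ell_{xy}\wedge\ell'_{xy}=\ell_{xx}\wedge\ell'_{yy}.$$
   Context: Let $V$ be a $3$-dimensional vector space over a field $k$ and $\zeta\in GL(V)$. Write $xy$ for $x\otimes y$ in the tensor algebra $T(V)$. Put $x\barwedge y=\zeta(x)y-\zeta(y)x\in V^{\otimes 2}$ and $x\barwedge y\barwedge z=\zeta^2(x)\zeta(y)z+\zeta^2(y)\zeta(z)x+\zeta^2(z)\zeta(x)y-\zeta^2(x)\zeta(z)y-\zeta^2(y)\zeta(x)z-\zeta^2(z)\zeta(y)x\in V^{\otimes3}$. Let $I$ be the two-sided ideal of $T(V)$ generated by all $x\barwedge y$, $A=T(V)/I$, $I_2=I\cap V^{\otimes 2}$ (spanned by the $x\barwedge y$), and $\Upsilon^{(3)}=(I_2\otimes V)\cap(V\otimes I_2)$, the one-dimensional space spanned by the $x\barwedge y\barwedge z$. The maps $x\wedge y\mapsto x\barwedge y$ and $x\wedge y\wedge z\mapsto x\barwedge y\barwedge z$ are linear isomorphisms $\bigwedge^2V\cong I_2$, $\bigwedge^3V\cong\Upsilon^{(3)}$; transporting the exterior product, for $x\in V$ and $w\in I_2$ one gets $x\barwedge w\in\Upsilon^{(3)}$, bilinear, with $x\barwedge(y\barwedge z)=x\barwedge y\barwedge z$. Let $R$ be a Hecke symmetry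 on $V$ with parameter $q\ne0$ (i.e. $R$ satisfies the braid equation $(R\otimes\mathrm{Id})(\mathrm{Id}\otimes R)(R\otimes\mathrm{Id})=(\mathrm{Id}\otimes R)(R\otimes\mathrm{Id})(\mathrm{Id}\otimes R)$ and $(R-q\,\mathrm{Id})(R+\mathrm{Id})=0$) such that $\mathbb{S}(V,R)=A$, i.e. $\mathrm{Im}(R-q\,\mathrm{Id}_{V\otimes V})=I_2$. Put $R'=(\zeta^{-1}\otimes\zeta^{-1})R(\zeta\otimes\zeta)$, $Y=q\,\mathrm{Id}-R$, $Y'=q\,\mathrm{Id}-R'$. Fix a nonzero alternating trilinear form $\omega$ on $V$ and let $\tilde\omega:\Upsilon^{(3)}\to k$ be the linear map with $\tilde\omega(x\barwedge y\barwedge z)=\omega(x,y,z)$. Define linear forms $\ell_{xy},\ell'_{xy}\in V^*$ for $x,y\in V$ by $\ell_{xy}(z)=\tilde\omega\big(x\barwedge Y(\zeta(y)z)\big)$ and $\ell'_{xy}(z)=\tilde\omega\big(x\barwedge Y'(\zeta(y)z)\big)$. *)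

(* Defs.v *)
(* V = 'rV[k]_3 (row vectors, a basis of V being fixed),
   V^{(x)2} = 'rV[k]_9, V^{(x)3} = 'rV[k]_27, with x (x) y := x *t y
   (Kronecker product, row-major indexing, from mathcomp.real_closed.mxtens).
   Linear maps act on the RIGHT of row vectors: f(w) = w *m F, hence the
   matrix of a composite f o g is G *m F. *)
From mathcomp Require Import all_boot all_order all_algebra.
From mathcomp Require Import mxtens.
Set Implicit Arguments.
Unset Strict Implicit.
Unset Printing Implicit Defensive.
Import GRing.Theory.
Local Open Scope ring_scope.

Section Defs.
Variable k : fieldType.

Definition t2 (x y : 'rV[k]_3) : 'rV[k]_9 := x *t y.
Definition t3 (x y z : 'rV[k]_3) : 'rV[k]_27 := (x *t y) *t z.
Definition tVI (x : 'rV[k]_3) (a : 'rV[k]_9) : 'rV[k]_27 := x *t a.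
Definition tIV (a : 'rV[k]_9) (z : 'rV[k]_3) : 'rV[k]_27 := a *t z.

Definition mxI (F : 'M[k]_9) : 'M[k]_27 := F *t (1%:M : 'M[k]_3).
Definition Imx (F : 'M[k]_9) : 'M[k]_27 := (1%:M : 'M[k]_3) *t F.

(* zeta acts by x |-> x *m Z *)
Definition bw2 (Z : 'M[k]_3) (x y : 'rV[k]_3) : 'rV[k]_9 :=
  t2 (x *m Z) y - t2 (y *m Z) x.

Definition bw3 (Z : 'M[k]_3) (x y z : 'rV[k]_3) : 'rV[k]_27 :=
  t3 (x *m Z *m Z) (y *m Z) z + t3 (y *m Z *m Z) (z *m Z) x
  + t3 (z *m Z *m Z) (x *m Z) y - t3 (x *m Z *m Z) (z *m Z) y
  - t3 (y *m Z *m Z) (x *m Z) z - t3 (z *m Z *m Z) (y *m Z) x.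

Definition inspan n (P : 'rV[k]_n -> Prop) (w : 'rV[k]_n) : Prop :=
  forall U : 'M[k]_n, (forall v, P v -> (v <= U)%MS) -> (w <= U)%MS.

Definition inI2 (Z : 'M[k]_3) : 'rV[k]_9 -> Prop :=
  inspan (fun v => exists x y, v = bw2 Z x y).
Definition inI2V (Z : 'M[k]_3) : 'rV[k]_27 -> Prop :=
  inspan (fun u => exists a z, inI2 Z a /\ u = tIV a z).
Definition inVI2 (Z : 'M[k]_3) : 'rV[k]_27 -> Prop :=
  inspan (fun u => exists x a, inI2 Z a /\ u = tVI x a).
Definition inUps3 (Z : 'M[k]_3) (u : 'rV[k]_27) : Prop :=
  inI2V Z u /\ inVI2 Z u.

Definition e (i : nat) : 'rV[k]_3 := delta_mx 0 (inord i).

(* the images of the basis e0^e1, e0^e2, e1^e2 of /\^2 V in I_2 *)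
Definition B2 (Z : 'M[k]_3) : 'M[k]_(3, 9) :=
  col_mx (bw2 Z (e 0) (e 1)) (col_mx (bw2 Z (e 0) (e 2)) (bw2 Z (e 1) (e 2))).

(* coordinates of the preimage in /\^2 V (basis e0^e1, e0^e2, e1^e2) of w in I_2 *)
Definition wcoord (Z : 'M[k]_3) (w : 'rV[k]_9) : 'rV[k]_3 := w *m pinvmx (B2 Z).

(* x barwedge w for x in V, w in I_2 (transport of the exterior product) *)
Definition bwVI (Z : 'M[k]_3) (x : 'rV[k]_3) (w : 'rV[k]_9) : 'rV[k]_27 :=
  let c := wcoord Z w in
  c 0 (inord 0) *: bw3 Z x (e 0) (e 1) + c 0 (inord 1) *: bw3 Z x (e 0) (e 2)
  + c 0 (inord 2) *: bw3 Z x (e 1) (e 2).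

(* omega-tilde : Upsilon^(3) -> k, omt(t * e0 bw e1 bw e2) = t * omega(e0,e1,e2) *)
Definition omt (Z : 'M[k]_3) (om : 'rV[k]_3 -> 'rV[k]_3 -> 'rV[k]_3 -> k)
  (u : 'rV[k]_27) : k :=
  (u *m pinvmx (bw3 Z (e 0) (e 1) (e 2))) 0 0 * om (e 0) (e 1) (e 2).

(* ell_{xy}(z) = omt (x bw Y(zeta(y) z)) ; Y given as a matrix acting on the right *)
Definition ell (Z : 'M[k]_3) om (Y : 'M[k]_9) (x y : 'rV[k]_3) : 'rV[k]_3 -> k :=
  fun z => omt Z om (bwVI Z x (t2 (y *m Z) z *m Y)).

(* exterior product of two linear forms, as an alternating bilinear form *)
Definition wedge1 (a b : 'rV[k]_3 -> k) (u v : 'rV[k]_3) : k :=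
  a u * b v - a v * b u.

Definition trilinear (om : 'rV[k]_3 -> 'rV[k]_3 -> 'rV[k]_3 -> k) : Prop :=
  (forall c x x' y z, om (c *: x + x') y z = c * om x y z + om x' y z) /\
  (forall c x y y' z, om x (c *: y + y') z = c * om x y z + om x y' z) /\
  (forall c x y z z', om x y (c *: z + z') = c * om x y z + om x y z').

Definition alternating (om : 'rV[k]_3 -> 'rV[k]_3 -> 'rV[k]_3 -> k) : Prop :=
  (forall x z, om x x z = 0) /\ (forall x y, om x y y = 0) /\
  (forall x y, om x y x = 0).

End Defs.

(* Main.v *)
Require Import Defs.
From mathcomp Require Import all_boot all_order all_algebra.
From mathcomp Require Import mxtens.
From mathcomp Require Import ring.
Import GRing.Theory.
Local Open Scope ring_scope.
Set Implicit Arguments.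
Unset Strict Implicit.

Section S.
Variable k : fieldType.

Definition i0 : 'I_3 := @Ordinal 3 0 isT.
Definition i1 : 'I_3 := @Ordinal 3 1 isT.
Definition i2 : 'I_3 := @Ordinal 3 2 isT.

Lemma ord3P (i : 'I_3) : i = i0 \/ i = i1 \/ i = i2.
Proof.
case: i => [[|[|[|n]]] H]; rewrite /i0 /i1 /i2.
- by left; apply: val_inj.
- by right; left; apply: val_inj.
- by right; right; apply: val_inj.
- by [].
Qed.

Definition idx2 (i j : 'I_3) : 'I_9 := mxtens_index (i, j).
Definition idx3 (i j l : 'I_3) : 'I_27 := mxtens_index (i, mxtens_index (j, l) : 'I_(3*3)).

Lemma idx3E (i j l : 'I_3) :
  (mxtens_index (mxtens_index (i, j) : 'I_(3*3), l) : 'I_27) = idx3 i j l.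
Proof. apply: val_inj => /=. rewrite !mulnDl -!mulnA !addnA //. Qed.

Lemma ent2 (a b : 'rV[k]_3) i j : (a *t b) 0 (idx2 i j) = a 0 i * b 0 j.
Proof. by rewrite /idx2 !mxE mxtens_indexK !ord1. Qed.


Lemma tensDl m n p r (A B : 'M[k]_(m,n)) (C : 'M[k]_(p,r)) :
  (A + B) *t C = A *t C + B *t C.
Proof. by apply/matrixP => i j; rewrite !mxE mulrDl. Qed.
Lemma tensDr m n p r (A : 'M[k]_(m,n)) (B C : 'M[k]_(p,r)) :
  A *t (B + C) = A *t B + A *t C.
Proof. by apply/matrixP => i j; rewrite !mxE mulrDr. Qed.
Lemma tensNl m n p r (A : 'M[k]_(m,n)) (C : 'M[k]_(p,r)) :
  (- A) *t C = - (A *t C).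
Proof. by apply/matrixP => i j; rewrite !mxE mulNr. Qed.
Lemma tensNr m n p r (A : 'M[k]_(m,n)) (C : 'M[k]_(p,r)) :
  A *t (- C) = - (A *t C).
Proof. by apply/matrixP => i j; rewrite !mxE mulrN. Qed.
Lemma tensBl m n p r (A B : 'M[k]_(m,n)) (C : 'M[k]_(p,r)) :
  (A - B) *t C = A *t C - B *t C.
Proof. by rewrite tensDl tensNl. Qed.
Lemma tensBr m n p r (A : 'M[k]_(m,n)) (B C : 'M[k]_(p,r)) :
  A *t (B - C) = A *t B - A *t C.
Proof. by rewrite tensDr tensNr. Qed.
Lemma tensZl m n p r c (A : 'M[k]_(m,n)) (C : 'M[k]_(p,r)) :
  (c *: A) *t C = c *: (A *t C).
Proof. by apply/matrixP => i j; rewrite !mxE mulrA. Qed.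
Lemma tensZr m n p r c (A : 'M[k]_(m,n)) (C : 'M[k]_(p,r)) :
  A *t (c *: C) = c *: (A *t C).
Proof. by apply/matrixP => i j; rewrite !mxE mulrCA. Qed.
Lemma tens_suml m n p r I (s : seq I) (P : pred I) (F : I -> 'M[k]_(m,n)) (C : 'M[k]_(p,r)) :
  (\sum_(i <- s | P i) F i) *t C = \sum_(i <- s | P i) (F i *t C).
Proof.
apply/matrixP => i j; rewrite !mxE !summxE mulr_suml.
by apply: eq_bigr => l _; rewrite !mxE.
Qed.

Lemma tens11 m n : (1%:M : 'M[k]_m) *t (1%:M : 'M[k]_n) = 1%:M.
Proof.
apply/matrixP => i j.
case: (mxtens_indexP i) => a b; case: (mxtens_indexP j) => c d.
rewrite tensmxE !mxE (inj_eq (can_inj (@mxtens_indexK m n))) xpair_eqE.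
by case: (a == c); case: (b == d); rewrite ?mulr1 ?mulr0 ?mul0r.
Qed.

Lemma tensA_rv (a b c : 'rV[k]_3) : ((a *t b) *t c : 'rV_27) = a *t (b *t c).
Proof.
apply/matrixP => i j; rewrite ord1 {i}.
case: (@mxtens_indexP (3*3) 3 j) => ij l; case: (@mxtens_indexP 3 3 ij) => i' j'.
rewrite [in RHS]idx3E /idx3 !mxE !mxtens_indexK /= ?mxE ?mxtens_indexK /=.
by rewrite mulrA; congr (a _ _ * b _ _ * c _ _); apply: val_inj.
Qed.


Lemma tensA_mx (A B C : 'M[k]_3) : ((A *t B) *t C : 'M_27) = A *t (B *t C).
Proof.
apply/matrixP => i j.
case: (@mxtens_indexP (3*3) 3 i) => ij l; case: (@mxtens_indexP 3 3 ij) => i' j'.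
case: (@mxtens_indexP (3*3) 3 j) => ij2 l2; case: (@mxtens_indexP 3 3 ij2) => i2' j2'.
rewrite [in RHS]idx3E [in RHS]idx3E /idx3 !mxE !mxtens_indexK /=.
by rewrite mulrA.
Qed.

Lemma tensmx_mulv (a : 'rV[k]_3) (s : 'rV[k]_9) (A : 'M[k]_3) (B : 'M[k]_9) :
  (a *t s : 'rV_27) *m (A *t B) = (a *m A) *t (s *m B).
Proof. exact: (@tensmx_mul k 1 3 1 9 3 9 a s A B). Qed.


Lemma tm33 (a b : 'rV[k]_3) (A B : 'M[k]_3) :
  (a *t b : 'rV_9) *m (A *t B) = (a *m A) *t (b *m B).
Proof. exact: (@tensmx_mul k 1 3 1 3 3 3 a b A B). Qed.
Lemma tm93 (s : 'rV[k]_9) (c : 'rV[k]_3) (A : 'M[k]_9) (B : 'M[k]_3) :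
  (s *t c : 'rV_27) *m (A *t B) = (s *m A) *t (c *m B).
Proof. exact: (@tensmx_mul k 1 9 1 3 9 3 s c A B). Qed.
Lemma tm39 (c : 'rV[k]_3) (s : 'rV[k]_9) (A : 'M[k]_3) (B : 'M[k]_9) :
  (c *t s : 'rV_27) *m (A *t B) = (c *m A) *t (s *m B).
Proof. exact: (@tensmx_mul k 1 3 1 9 3 9 c s A B). Qed.
Lemma mm33 (A B C D : 'M[k]_3) :
  (A *t B : 'M_9) *m (C *t D) = (A *m C) *t (B *m D).
Proof. exact: (@tensmx_mul k 3 3 3 3 3 3 A B C D). Qed.
Lemma mm93 (A C : 'M[k]_9) (B D : 'M[k]_3) :
  (A *t B : 'M_27) *m (C *t D) = (A *m C) *t (B *m D).
Proof. exact: (@tensmx_mul k 9 9 3 3 9 3 A B C D). Qed.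
Lemma mm39 (A C : 'M[k]_3) (B D : 'M[k]_9) :
  (A *t B : 'M_27) *m (C *t D) = (A *m C) *t (B *m D).
Proof. exact: (@tensmx_mul k 3 3 9 9 3 9 A B C D). Qed.

Lemma eE0 : e k 0 = delta_mx 0 i0. Proof. by rewrite /e; congr delta_mx; apply: val_inj; rewrite /= inordK. Qed.
Lemma eE1 : e k 1 = delta_mx 0 i1. Proof. by rewrite /e; congr delta_mx; apply: val_inj; rewrite /= inordK. Qed.
Lemma eE2 : e k 2 = delta_mx 0 i2. Proof. by rewrite /e; congr delta_mx; apply: val_inj; rewrite /= inordK. Qed.

Lemma rowexp (x : 'rV[k]_3) :
  x = x 0 i0 *: delta_mx 0 i0 + x 0 i1 *: delta_mx 0 i1 + x 0 i2 *: delta_mx 0 i2.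
Proof.
apply/matrixP => a j; rewrite ord1 !mxE /=.
by case: (ord3P j) => [->|[->|->]] /=; rewrite ?mulr1 ?mulr0 ?addr0 ?add0r.
Qed.

Lemma colE n (v : 'rV[k]_n) p : (v *m delta_mx p (0 : 'I_1)) 0 0 = v 0 p.
Proof.
rewrite mxE (bigD1 p) //= mxE !eqxx mulr1 big1 ?addr0 // => i /negbTE Hi.
by rewrite mxE Hi mulr0.
Qed.

Lemma inspan_lin n (P : 'rV[k]_n -> Prop) w (F : 'M[k]_(n, 1)) :
  inspan P w -> (forall v, P v -> (v *m F) 0 0 = 0) -> (w *m F) 0 0 = 0.
Proof.
move=> Hw HP.
have H1 : forall v : 'rV[k]_n, (v *m F) 0 0 = 0 -> (v <= kermx F)%MS.
  move=> v Hv; apply/sub_kermxP; apply/matrixP => a b; rewrite !ord1 Hv.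
  by rewrite mxE.
have := Hw (kermx F) (fun v Pv => H1 v (HP v Pv)).
by move/sub_kermxP => ->; rewrite mxE.
Qed.


Lemma sum3 (F : 'I_3 -> k) : \sum_(l < 3) F l = F i0 + F i1 + F i2.
Proof.
rewrite !big_ord_recl big_ord0 addr0 addrA.
by congr (F _ + F _ + F _); apply: val_inj.
Qed.

Definition alt9 (s : 'rV[k]_9) :=
  (forall i j, s 0 (idx2 i j) + s 0 (idx2 j i) = 0) /\ (forall i, s 0 (idx2 i i) = 0).
Definition alt12 (u : 'rV[k]_27) :=
  (forall i j l, u 0 (idx3 i j l) + u 0 (idx3 j i l) = 0) /\ (forall i l, u 0 (idx3 i i l) = 0).
Definition alt23 (u : 'rV[k]_27) :=
  (forall i j l, u 0 (idx3 i j l) + u 0 (idx3 i l j) = 0) /\ (forall i j, u 0 (idx3 i j j) = 0).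

Lemma entF n m (v : 'rV[k]_n) (M : 'M[k]_(n, m)) (p p' : 'I_m) :
  (v *m (M *m (delta_mx p (0:'I_1) + delta_mx p' (0:'I_1)))) 0 0 = (v *m M) 0 p + (v *m M) 0 p'.
Proof. by rewrite mulmxA mulmxDr mxE colE colE. Qed.
Lemma entF1 n m (v : 'rV[k]_n) (M : 'M[k]_(n, m)) (p : 'I_m) :
  (v *m (M *m delta_mx p (0:'I_1))) 0 0 = (v *m M) 0 p.
Proof. by rewrite mulmxA colE. Qed.

Lemma span_alt9 n (P : 'rV[k]_n -> Prop) w (M : 'M[k]_(n, 9)) :
  inspan P w -> (forall v, P v -> alt9 (v *m M)) -> alt9 (w *m M).
Proof.
move=> Hw HP; split.
- move=> i j; rewrite -entF; apply: (inspan_lin Hw) => v Pv.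
  by rewrite entF; apply: (HP v Pv).1.
- move=> i; rewrite -entF1; apply: (inspan_lin Hw) => v Pv.
  by rewrite entF1; apply: (HP v Pv).2.
Qed.

Lemma span_alt12 n (P : 'rV[k]_n -> Prop) w (M : 'M[k]_(n, 27)) :
  inspan P w -> (forall v, P v -> alt12 (v *m M)) -> alt12 (w *m M).
Proof.
move=> Hw HP; split.
- move=> i j l; rewrite -entF; apply: (inspan_lin Hw) => v Pv.
  by rewrite entF; apply: (HP v Pv).1.
- move=> i l; rewrite -entF1; apply: (inspan_lin Hw) => v Pv.
  by rewrite entF1; apply: (HP v Pv).2.
Qed.

Lemma span_alt23 n (P : 'rV[k]_n -> Prop) w (M : 'M[k]_(n, 27)) :
  inspan P w -> (forall v, P v -> alt23 (v *m M)) -> alt23 (w *m M).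
Proof.
move=> Hw HP; split.
- move=> i j l; rewrite -entF; apply: (inspan_lin Hw) => v Pv.
  by rewrite entF; apply: (HP v Pv).1.
- move=> i j; rewrite -entF1; apply: (inspan_lin Hw) => v Pv.
  by rewrite entF1; apply: (HP v Pv).2.
Qed.

Lemma eD m n (A B : 'M[k]_(m,n)) r p : (A + B) r p = A r p + B r p.
Proof. by rewrite !mxE. Qed.
Lemma eB m n (A B : 'M[k]_(m,n)) r p : (A - B) r p = A r p - B r p.
Proof. by rewrite !mxE. Qed.
Lemma eN m n (A : 'M[k]_(m,n)) r p : (- A) r p = - A r p.
Proof. by rewrite !mxE. Qed.
Lemma eZ m n c (A : 'M[k]_(m,n)) r p : (c *: A) r p = c * A r p.
Proof. by rewrite !mxE. Qed.

Lemma alt9_tens (a b : 'rV[k]_3) : alt9 (a *t b - b *t a).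
Proof.
split => [i j|i]; rewrite !eB !ent2; ring.
Qed.

Lemma ent3 (a b c : 'rV[k]_3) i j l : (a *t (b *t c) : 'rV_27) 0 (idx3 i j l) = a 0 i * b 0 j * c 0 l.
Proof.
rewrite /idx3 !mxE !mxtens_indexK /= ?mxE ?mxtens_indexK /= mulrA.
by congr (a _ _ * b _ _ * c _ _); apply: val_inj.
Qed.

Lemma ent39 (a : 'rV[k]_3) (s : 'rV[k]_9) i j l : (a *t s : 'rV_27) 0 (idx3 i j l) = a 0 i * s 0 (idx2 j l).
Proof.
rewrite /idx3 !mxE !mxtens_indexK /=.
by congr (a _ _ * s _ _); apply: val_inj.
Qed.

Lemma ent93 (s : 'rV[k]_9) (c : 'rV[k]_3) i j l : (s *t c : 'rV_27) 0 (idx3 i j l) = s 0 (idx2 i j) * c 0 l.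
Proof.
rewrite -idx3E !mxE !mxtens_indexK /=.
by congr (s _ _ * c _ _); apply: val_inj.
Qed.


Variable Z : 'M[k]_3.
Hypothesis Zu : Z \in unitmx.
Local Notation Zi := (invmx Z).
Local Notation I3 := (1%:M : 'M[k]_3).

Lemma ZZi : Z *m Zi = 1%:M. Proof. exact: mulmxV. Qed.
Lemma ZiZ : Zi *m Z = 1%:M. Proof. exact: mulVmx. Qed.
Lemma vZZi (a : 'rV[k]_3) : a *m Z *m Zi = a. Proof. by rewrite -mulmxA ZZi mulmx1. Qed.
Lemma vZiZ (a : 'rV[k]_3) : a *m Zi *m Z = a. Proof. by rewrite -mulmxA ZiZ mulmx1. Qed.
Lemma vZZ2 (a : 'rV[k]_3) : a *m Z *m Z *m (Zi *m Zi) = a.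
Proof. by rewrite mulmxA vZZi vZZi. Qed.
Lemma ZZ2 : Z *m Z *m (Zi *m Zi) = 1%:M.
Proof. by rewrite mulmxA -(mulmxA Z Z Zi) ZZi mulmx1 ZZi. Qed.
Lemma ZZ2' : (Zi *m Zi) *m (Z *m Z) = 1%:M.
Proof. by rewrite mulmxA -(mulmxA Zi Zi Z) ZiZ mulmx1 ZiZ. Qed.

Lemma bw2_tw1 (a b : 'rV[k]_3) : bw2 Z a b *m (Zi *t I3) = a *t b - b *t a.
Proof. by rewrite /bw2 /t2 mulmxBl !tm33 !vZZi !mulmx1. Qed.

Lemma bw2_tw2 (a b : 'rV[k]_3) : bw2 Z a b *m ((Zi *m Zi) *t Zi) =
  (a *m Zi) *t (b *m Zi) - (b *m Zi) *t (a *m Zi).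
Proof. by rewrite /bw2 /t2 mulmxBl !tm33 !mulmxA !vZZi. Qed.

Lemma I2_alt (s : 'rV[k]_9) (M : 'M[k]_9) :
  inI2 Z s -> (forall a b, alt9 (bw2 Z a b *m M)) -> alt9 (s *m M).
Proof.
move=> Hs HM; apply: (span_alt9 Hs) => v [a [b ->]]; exact: HM.
Qed.

Lemma I2_alt1 s : inI2 Z s -> alt9 (s *m (Zi *t I3)).
Proof. move=> Hs; apply: (I2_alt Hs) => a b; rewrite bw2_tw1; exact: alt9_tens. Qed.
Lemma I2_alt2 s : inI2 Z s -> alt9 (s *m ((Zi *m Zi) *t Zi)).
Proof. move=> Hs; apply: (I2_alt Hs) => a b; rewrite bw2_tw2; exact: alt9_tens. Qed.

Definition g9 : 'M[k]_27 := ((Zi *m Zi) *t Zi) *t I3.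
Definition g3 : 'M[k]_27 := (Zi *m Zi) *t (Zi *t I3).
Definition h9 : 'M[k]_27 := ((Z *m Z) *t Z) *t I3.
Definition h3 : 'M[k]_27 := (Z *m Z) *t (Z *t I3).
Lemma g93 : g9 = g3. Proof. exact: tensA_mx. Qed.
Lemma h93 : h9 = h3. Proof. exact: tensA_mx. Qed.
Lemma g3h3 : g3 *m h3 = 1%:M.
Proof. by rewrite /g3 /h3 mm39 mm33 ZZ2' ZiZ !mulmx1 !tens11. Qed.
Lemma h3g3 : h3 *m g3 = 1%:M.
Proof. by rewrite /g3 /h3 mm39 mm33 ZZ2 ZZi !mulmx1 !tens11. Qed.

Lemma Ups_alt u : inUps3 Z u -> alt12 (u *m g3) /\ alt23 (u *m g3).
Proof.
case=> H1 H2; split.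
- rewrite -g93; apply: (span_alt12 H1) => v [a [z [Ha ->]]].
  rewrite /tIV /g9 tm93 mulmx1.
  have [A1 A2] := I2_alt2 Ha.
  split => [i j l|i l]; rewrite !ent93.
  + by rewrite -mulrDl A1 mul0r.
  + by rewrite A2 mul0r.
- apply: (span_alt23 H2) => v [x [a [Ha ->]]].
  rewrite /tVI /g3 tm39.
  have [A1 A2] := I2_alt1 Ha.
  split => [i j l|i j]; rewrite !ent39.
  + by rewrite -mulrDr A1 mulr0.
  + by rewrite A2 mulr0.
Qed.


Lemma sum0 (a b : k) : a + b = 0 -> a = - b.
Proof. by move/eqP; rewrite addr_eq0 => /eqP. Qed.

Definition Om (x : 'rV[k]_3) (s : 'rV[k]_9) : k :=
  x 0 i0 * s 0 (idx2 i1 i2) + x 0 i1 * s 0 (idx2 i2 i0) + x 0 i2 * s 0 (idx2 i0 i1).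
Definition sl (i : 'I_3) (u : 'rV[k]_27) : 'rV[k]_9 :=
  \row_(p < 3 * 3) u 0 (mxtens_index (i, p)).
Definition Psi (x y : 'rV[k]_3) (u : 'rV[k]_27) : k :=
  (x 0 i1 * y 0 i2 - x 0 i2 * y 0 i1) * Om x (sl i0 u)
  + (x 0 i2 * y 0 i0 - x 0 i0 * y 0 i2) * Om x (sl i1 u)
  + (x 0 i0 * y 0 i1 - x 0 i1 * y 0 i0) * Om x (sl i2 u).

Lemma slE i u j l : sl i u 0 (idx2 j l) = u 0 (idx3 i j l).
Proof. by rewrite mxE. Qed.

Lemma Psi_alt x y u : alt12 u -> alt23 u -> Psi x y u = 0.
Proof.
move=> [A1 A2] [B1 B2].
rewrite /Psi /Om !slE.
have e120 : u 0 (idx3 i1 i2 i0) = u 0 (idx3 i0 i1 i2).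
  by rewrite (sum0 (B1 i1 i2 i0)) (sum0 (A1 i1 i0 i2)) opprK.
have e201 : u 0 (idx3 i2 i0 i1) = u 0 (idx3 i0 i1 i2).
  by rewrite (sum0 (A1 i2 i0 i1)) (sum0 (B1 i0 i2 i1)) opprK.
have z020 : u 0 (idx3 i0 i2 i0) = 0 by rewrite (sum0 (B1 i0 i2 i0)) A2 oppr0.
have z101 : u 0 (idx3 i1 i0 i1) = 0 by rewrite (sum0 (A1 i1 i0 i1)) B2 oppr0.
have z212 : u 0 (idx3 i2 i1 i2) = 0 by rewrite (sum0 (A1 i2 i1 i2)) B2 oppr0.
rewrite e120 e201 z020 z101 z212 !A2; ring.
Qed.

Lemma slD i u v : sl i (u + v) = sl i u + sl i v.
Proof. by apply/matrixP => a p; rewrite !mxE. Qed.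
Lemma slB i u v : sl i (u - v) = sl i u - sl i v.
Proof. by apply/matrixP => a p; rewrite !mxE. Qed.
Lemma slZ i c u : sl i (c *: u) = c *: sl i u.
Proof. by apply/matrixP => a p; rewrite !mxE. Qed.
Lemma sl_tens i (t : 'rV[k]_3) (s : 'rV[k]_9) : sl i (t *t s) = t 0 i *: s.
Proof.
apply/matrixP => a p; rewrite ord1 !mxE mxtens_indexK /=.
by congr (t _ _ * s _ _); apply: val_inj.
Qed.

Lemma OmD x s t : Om x (s + t) = Om x s + Om x t.
Proof. rewrite /Om !eD; ring. Qed.
Lemma OmB x s t : Om x (s - t) = Om x s - Om x t.
Proof. rewrite /Om !eB; ring. Qed.
Lemma OmZ x c s : Om x (c *: s) = c * Om x s.
Proof. rewrite /Om !eZ; ring. Qed.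

Lemma PsiD x y u v : Psi x y (u + v) = Psi x y u + Psi x y v.
Proof. rewrite /Psi !slD !OmD; ring. Qed.
Lemma PsiB x y u v : Psi x y (u - v) = Psi x y u - Psi x y v.
Proof. rewrite /Psi !slB !OmB; ring. Qed.
Lemma PsiZ x y c u : Psi x y (c *: u) = c * Psi x y u.
Proof. rewrite /Psi !slZ !OmZ; ring. Qed.
Lemma Psi_tens x y (t : 'rV[k]_3) (s : 'rV[k]_9) :
  Psi x y (t *t s) = ((x 0 i1 * y 0 i2 - x 0 i2 * y 0 i1) * t 0 i0
    + (x 0 i2 * y 0 i0 - x 0 i0 * y 0 i2) * t 0 i1
    + (x 0 i0 * y 0 i1 - x 0 i1 * y 0 i0) * t 0 i2) * Om x s.
Proof. rewrite /Psi !sl_tens !OmZ; ring. Qed.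


Lemma B2r0 j : B2 Z i0 j = bw2 Z (e k 0) (e k 1) 0 j.
Proof.
rewrite /B2 (_ : i0 = lshift (1 + 1) (0 : 'I_1)); last by apply: val_inj.
exact: col_mxEu.
Qed.
Lemma B2r1 j : B2 Z i1 j = bw2 Z (e k 0) (e k 2) 0 j.
Proof.
rewrite /B2 (_ : i1 = rshift 1 (lshift 1 (0 : 'I_1))); last by apply: val_inj.
by rewrite [LHS](col_mxEd (m1 := 1)); exact: col_mxEu.
Qed.
Lemma B2r2 j : B2 Z i2 j = bw2 Z (e k 1) (e k 2) 0 j.
Proof.
rewrite /B2 (_ : i2 = rshift 1 (rshift 1 (0 : 'I_1))); last by apply: val_inj.
by rewrite [LHS](col_mxEd (m1 := 1)); exact: col_mxEd.
Qed.

Lemma mulB2 (c : 'rV[k]_3) : c *m B2 Z =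
  c 0 i0 *: bw2 Z (e k 0) (e k 1) + c 0 i1 *: bw2 Z (e k 0) (e k 2)
  + c 0 i2 *: bw2 Z (e k 1) (e k 2).
Proof.
apply/matrixP => a j; rewrite ord1 [LHS]mxE sum3 B2r0 B2r1 B2r2.
by rewrite !mxE.
Qed.

Lemma tw1_inj (s t : 'rV[k]_9) : s *m (Zi *t I3) = t *m (Zi *t I3) -> s = t.
Proof.
move=> H.
have E : forall r : 'rV[k]_9, r = r *m (Zi *t I3) *m (Z *t I3).
  by move=> r; rewrite -mulmxA mm33 ZiZ mulmx1 tens11 mulmx1.
by rewrite (E s) (E t) H.
Qed.

Lemma g9_inj (s t : 'rV[k]_27) : s *m g9 = t *m g9 -> s = t.
Proof.
move=> H.
have E : forall r : 'rV[k]_27, r = r *m g9 *m h3.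
  by move=> r; rewrite g93 -mulmxA g3h3 mulmx1.
by rewrite (E s) (E t) H.
Qed.

Lemma dE (a b : 'I_3) : (delta_mx 0 a : 'rV[k]_3) 0 b = (a == b)%:R.
Proof. by rewrite mxE eqxx eq_sym. Qed.

Lemma bw2exp (a b : 'rV[k]_3) : bw2 Z a b =
  (a 0 i0 * b 0 i1 - a 0 i1 * b 0 i0) *: bw2 Z (e k 0) (e k 1)
  + (a 0 i0 * b 0 i2 - a 0 i2 * b 0 i0) *: bw2 Z (e k 0) (e k 2)
  + (a 0 i1 * b 0 i2 - a 0 i2 * b 0 i1) *: bw2 Z (e k 1) (e k 2).
Proof.
apply: tw1_inj; rewrite bw2_tw1 !mulmxDl -!scalemxAl !bw2_tw1 eE0 eE1 eE2.
apply/matrixP => r p; rewrite ord1.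
case: (@mxtens_indexP 3 3 p) => i j; rewrite -/(idx2 i j).
rewrite !eB !eD !eZ !ent2 !mxE.
by case: (ord3P i) => [->|[->|->]]; case: (ord3P j) => [->|[->|->]] /=; ring.
Qed.


Lemma bw2_sub (a b : 'rV[k]_3) : (bw2 Z a b <= B2 Z)%MS.
Proof.
set c := (a 0 i0 * b 0 i1 - a 0 i1 * b 0 i0) *: (delta_mx 0 i0 : 'rV[k]_3)
  + (a 0 i0 * b 0 i2 - a 0 i2 * b 0 i0) *: delta_mx 0 i1
  + (a 0 i1 * b 0 i2 - a 0 i2 * b 0 i1) *: delta_mx 0 i2.
have -> : bw2 Z a b = c *m B2 Z.
  rewrite mulB2 bw2exp /c !eD !eZ !mxE /=.
  by rewrite !mulr1 !mulr0 !addr0 !add0r.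
exact: submxMl.
Qed.

Lemma I2_B2 (s : 'rV[k]_9) : inI2 Z s -> (s <= B2 Z)%MS.
Proof.
move=> Hs; have := Hs <<B2 Z>>%MS; rewrite genmxE; apply => v [a [b ->]].
rewrite genmxE; exact: bw2_sub.
Qed.

Lemma bw2ZZ (a b : 'rV[k]_3) : bw2 Z a b *m (Zi *t Zi) = bw2 Z (a *m Zi) (b *m Zi).
Proof. by rewrite /bw2 /t2 mulmxBl !tm33 !vZZi !vZiZ. Qed.

Lemma B2_closed (s : 'rV[k]_9) : (s <= B2 Z)%MS -> (s *m (Zi *t Zi) <= B2 Z)%MS.
Proof.
move=> Hs; apply: (submx_trans (submxMr (Zi *t Zi) Hs)).
apply/row_subP => i; rewrite row_mul.
have [r Hr] : exists ab : 'rV[k]_3 * 'rV[k]_3, row i (B2 Z) = bw2 Z ab.1 ab.2.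
  case: (ord3P i) => [->|[->|->]].
  - by exists (e k 0, e k 1); apply/matrixP => a j; rewrite [LHS]mxE B2r0 ord1.
  - by exists (e k 0, e k 2); apply/matrixP => a j; rewrite [LHS]mxE B2r1 ord1.
  - by exists (e k 1, e k 2); apply/matrixP => a j; rewrite [LHS]mxE B2r2 ord1.
by rewrite Hr bw2ZZ bw2_sub.
Qed.


Definition Alt3 (a b c : 'rV[k]_3) : 'rV[k]_27 :=
  t3 a b c + t3 b c a + t3 c a b - t3 a c b - t3 b a c - t3 c b a.

Lemma t3tw (a b c : 'rV[k]_3) : t3 (a *m Z *m Z) (b *m Z) c *m g9 = t3 a b c.
Proof. by rewrite /t3 /g9 tm93 tm33 vZZ2 vZZi mulmx1. Qed.

Lemma bw3tw (a b c : 'rV[k]_3) : bw3 Z a b c *m g9 = Alt3 a b c.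
Proof. by rewrite /bw3 !mulmxBl !mulmxDl !t3tw. Qed.

Lemma t3ent (a b c : 'rV[k]_3) i j l : t3 a b c 0 (idx3 i j l) = a 0 i * b 0 j * c 0 l.
Proof. by rewrite /t3 ent93 ent2. Qed.

Lemma Alt3ent a b c i j l : Alt3 a b c 0 (idx3 i j l) =
  a 0 i * b 0 j * c 0 l + b 0 i * c 0 j * a 0 l + c 0 i * a 0 j * b 0 l
  - a 0 i * c 0 j * b 0 l - b 0 i * a 0 j * c 0 l - c 0 i * b 0 j * a 0 l.
Proof. by rewrite /Alt3 !eB !eD !t3ent. Qed.

Lemma Alt3_gen (x a b : 'rV[k]_3) (s : k) :
  (forall i j l, Alt3 x a b 0 (idx3 i j l) = s * Alt3 (delta_mx 0 i0) (delta_mx 0 i1) (delta_mx 0 i2) 0 (idx3 i j l)) ->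
  Alt3 x a b = s *: Alt3 (delta_mx 0 i0) (delta_mx 0 i1) (delta_mx 0 i2).
Proof.
move=> H; apply/matrixP => r p; rewrite ord1.
case: (@mxtens_indexP (3*3) 3 p) => ij l; case: (@mxtens_indexP 3 3 ij) => i j.
by rewrite idx3E eZ H.
Qed.

Lemma Alt3_01 x : Alt3 x (delta_mx 0 i0) (delta_mx 0 i1) =
  x 0 i2 *: Alt3 (delta_mx 0 i0) (delta_mx 0 i1) (delta_mx 0 i2).
Proof.
apply: Alt3_gen => i j l; rewrite !Alt3ent !mxE.
by case: (ord3P i) => [->|[->|->]]; case: (ord3P j) => [->|[->|->]];
   case: (ord3P l) => [->|[->|->]] /=; ring.
Qed.
Lemma Alt3_02 x : Alt3 x (delta_mx 0 i0) (delta_mx 0 i2) =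
  (- x 0 i1) *: Alt3 (delta_mx 0 i0) (delta_mx 0 i1) (delta_mx 0 i2).
Proof.
apply: Alt3_gen => i j l; rewrite !Alt3ent !mxE.
by case: (ord3P i) => [->|[->|->]]; case: (ord3P j) => [->|[->|->]];
   case: (ord3P l) => [->|[->|->]] /=; ring.
Qed.
Lemma Alt3_12 x : Alt3 x (delta_mx 0 i1) (delta_mx 0 i2) =
  x 0 i0 *: Alt3 (delta_mx 0 i0) (delta_mx 0 i1) (delta_mx 0 i2).
Proof.
apply: Alt3_gen => i j l; rewrite !Alt3ent !mxE.
by case: (ord3P i) => [->|[->|->]]; case: (ord3P j) => [->|[->|->]];
   case: (ord3P l) => [->|[->|->]] /=; ring.
Qed.

Local Notation U3 := (bw3 Z (e k 0) (e k 1) (e k 2)).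

Lemma bw3_01 x : bw3 Z x (e k 0) (e k 1) = x 0 i2 *: U3.
Proof. by apply: g9_inj; rewrite -scalemxAl !bw3tw !eE0 eE1 eE2 Alt3_01. Qed.
Lemma bw3_02 x : bw3 Z x (e k 0) (e k 2) = (- x 0 i1) *: U3.
Proof. by apply: g9_inj; rewrite -scalemxAl !bw3tw !eE0 eE1 eE2 Alt3_02. Qed.
Lemma bw3_12 x : bw3 Z x (e k 1) (e k 2) = x 0 i0 *: U3.
Proof. by apply: g9_inj; rewrite -scalemxAl !bw3tw !eE0 eE1 eE2 Alt3_12. Qed.

Lemma U3_neq0 : U3 != 0.
Proof.
apply/eqP => H.
have : (U3 *m g9) 0 (idx3 i0 i1 i2) = 0 by rewrite H mul0mx mxE.
rewrite bw3tw eE0 eE1 eE2 Alt3ent !mxE /=.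
by move/eqP; rewrite (_ : _ - _ = 1) ?oner_eq0 //; ring.
Qed.

Lemma omt_U3 om c : omt Z om (c *: U3) = c * om (e k 0) (e k 1) (e k 2).
Proof.
rewrite /omt -scalemxAl eZ.
set d := (U3 *m pinvmx U3) 0 0.
suff -> : d = 1 by rewrite mulr1.
have H := mulmxKpV (submx_refl U3).
rewrite [U3 *m pinvmx U3]mx11_scalar mul_scalar_mx -/d in H.
have : (d - 1) *: U3 == 0 by rewrite scalerBl H scale1r subrr.
rewrite scalemx_eq0 (negbTE U3_neq0) orbF subr_eq0.
by move/eqP.
Qed.


Lemma inord0 : (inord 0 : 'I_3) = i0. Proof. by apply: val_inj; rewrite /= inordK. Qed.
Lemma inord1 : (inord 1 : 'I_3) = i1. Proof. by apply: val_inj; rewrite /= inordK. Qed.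
Lemma inord2 : (inord 2 : 'I_3) = i2. Proof. by apply: val_inj; rewrite /= inordK. Qed.

Lemma omt_bwVI om x (m : 'rV[k]_9) : (m <= B2 Z)%MS ->
  omt Z om (bwVI Z x m) = om (e k 0) (e k 1) (e k 2) * Om x (m *m (Zi *t I3)).
Proof.
move=> Hm; rewrite /bwVI; set c := wcoord Z m.
rewrite inord0 inord1 inord2 (bw3_01 x) (bw3_02 x) (bw3_12 x) !scalerA -!scalerDl omt_U3.
rewrite [in RHS](_ : m = c *m B2 Z); last by rewrite /c /wcoord mulmxKpV.
rewrite mulB2 !mulmxDl -!scalemxAl !bw2_tw1 !OmD !OmZ /Om !eB !ent2 eE0 eE1 eE2 !mxE /=.
ring.
Qed.


Definition At (Y : 'M[k]_9) : 'M[k]_9 := (Z *t I3) *m Y *m (Zi *t I3).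
Definition Bt (Y : 'M[k]_9) : 'M[k]_9 := ((Z *m Z) *t Z) *m Y *m ((Zi *m Zi) *t Zi).

Lemma hYg9 (Y : 'M[k]_9) : h9 *m (Y *t I3) *m g9 = Bt Y *t I3.
Proof. by rewrite /h9 /g9 mm93 mm93 !mulmx1. Qed.
Lemma hYg3 (Y : 'M[k]_9) : h3 *m (I3 *t Y) *m g3 = I3 *t At Y.
Proof. by rewrite /h3 /g3 mm39 mm39 mulmx1 ZZ2. Qed.

Lemma Hg3 (Y : 'M[k]_9) (q : k) (w : 'rV[k]_27) :
  (w *m mxI Y *m Imx Y - q *: w) *m g3 =
  (w *m g3) *m (Bt Y *t I3) *m (I3 *t At Y) - q *: (w *m g3).
Proof.
rewrite /mxI /Imx mulmxBl -scalemxAl; congr (_ - _).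
rewrite -hYg3 -hYg9 h93 g93 !mulmxA.
rewrite -(mulmxA w g3 h3) g3h3 mulmx1.
rewrite -(mulmxA (w *m (Y *t I3)) g3 h3) g3h3 mulmx1.
done.
Qed.

Local Notation d0 := (delta_mx 0 i0 : 'rV[k]_3).
Local Notation d1 := (delta_mx 0 i1 : 'rV[k]_3).
Local Notation d2 := (delta_mx 0 i2 : 'rV[k]_3).

Lemma rowexp9 (P : 'rV[k]_9) : P =
  P 0 (idx2 i0 i0) *: (d0 *t d0)
  + P 0 (idx2 i0 i1) *: (d0 *t d1)
  + P 0 (idx2 i0 i2) *: (d0 *t d2)
  + P 0 (idx2 i1 i0) *: (d1 *t d0)
  + P 0 (idx2 i1 i1) *: (d1 *t d1)
  + P 0 (idx2 i1 i2) *: (d1 *t d2)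
  + P 0 (idx2 i2 i0) *: (d2 *t d0)
  + P 0 (idx2 i2 i1) *: (d2 *t d1)
  + P 0 (idx2 i2 i2) *: (d2 *t d2).
Proof.
apply/matrixP => r p; rewrite ord1.
case: (@mxtens_indexP 3 3 p) => i j; rewrite -/(idx2 i j).
rewrite !eD !eZ !ent2 !mxE.
by case: (ord3P i) => [->|[->|->]]; case: (ord3P j) => [->|[->|->]] /=; ring.
Qed.


Lemma PsiP x y (P : 'rV[k]_9) (c : 'rV[k]_3) (A : 'M[k]_9) : alt9 P ->
  Psi x y ((P *t c) *m (I3 *t A)) =
  Om y P * Om x ((x *t c) *m A) - Om x P * Om x ((y *t c) *m A).
Proof.
move=> [A1 A2].
have Ex : Om x ((x *t c) *m A) = x 0 i0 * Om x ((d0 *t c) *m A)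
   + x 0 i1 * Om x ((d1 *t c) *m A) + x 0 i2 * Om x ((d2 *t c) *m A).
  by rewrite {2}[x]rowexp !tensDl !tensZl !mulmxDl -!scalemxAl !OmD !OmZ.
have Ey : Om x ((y *t c) *m A) = y 0 i0 * Om x ((d0 *t c) *m A)
   + y 0 i1 * Om x ((d1 *t c) *m A) + y 0 i2 * Om x ((d2 *t c) *m A).
  by rewrite {1}[y]rowexp !tensDl !tensZl !mulmxDl -!scalemxAl !OmD !OmZ.
rewrite Ex Ey {1}[P]rowexp9.
rewrite !tensDl !tensZl !mulmxDl -!scalemxAl !tensA_rv !tm39 !mulmx1.
rewrite !PsiD !PsiZ !Psi_tens !mxE /=.
set a0 := Om x ((d0 *t c) *m A).
set a1 := Om x ((d1 *t c) *m A).
set a2 := Om x ((d2 *t c) *m A).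
rewrite /Om !A2 (sum0 (A1 i1 i0)) (sum0 (A1 i2 i0)) (sum0 (A1 i2 i1)).
ring.
Qed.

Lemma ell_At om (Y : 'M[k]_9) x y z : (t2 (y *m Z) z *m Y <= B2 Z)%MS ->
  ell Z om Y x y z = om (e k 0) (e k 1) (e k 2) * Om x ((y *t z) *m At Y).
Proof.
move=> H; rewrite /ell omt_bwVI //; congr (_ * Om x _).
by rewrite /At !mulmxA tm33 mulmx1.
Qed.

Lemma At_conj (Y : 'M[k]_9) : At ((Z *t Z) *m Y *m (Zi *t Zi)) = Bt Y.
Proof.
rewrite /At /Bt !mulmxA mm33 mul1mx -(mulmxA _ (Zi *t Zi)) mm33 mulmx1.
done.
Qed.

Lemma Yconj (q : k) (R : 'M[k]_9) :
  q%:M - (Z *t Z) *m R *m (Zi *t Zi) = (Z *t Z) *m (q%:M - R) *m (Zi *t Zi).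
Proof.
by rewrite mulmxBr mulmxBl mul_mx_scalar -scalemxAl mm33 ZZi tens11 scalemx1.
Qed.

Lemma wg3 (y v u : 'rV[k]_3) :
  tVI (y *m Z *m Z) (bw2 Z v u) *m g3 = y *t (v *t u - u *t v).
Proof. by rewrite /tVI /g3 tm39 vZZ2 bw2_tw1. Qed.

End S.

Unset Implicit Arguments.
Set Strict Implicit.

Theorem lemma2p1 (k : fieldType) (Z : 'M[k]_3) (R : 'M[k]_9) (q : k)
  (om : 'rV[k]_3 -> 'rV[k]_3 -> 'rV[k]_3 -> k) :
  Z \in unitmx ->
  q != 0 ->
  (* braid equation for R *)
  mxI R *m Imx R *m mxI R = Imx R *m mxI R *m Imx R ->
  (* Hecke relation (R - q)(R + 1) = 0 *)
  (R - q%:M) *m (R + 1%:M) = 0 ->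
  (* Im(R - q Id) = I_2 *)
  (forall w : 'rV[k]_9, (w <= R - q%:M)%MS <-> inI2 Z w) ->
  (* omega : nonzero alternating trilinear form *)
  trilinear om -> alternating om -> (exists x y z, om x y z != 0) ->
  (* hypothesis: (Id (x) Y)(Y (x) Id) w - q w in Upsilon^(3) for w in V (x) I_2 *)
  (forall w : 'rV[k]_27,
     inspan (fun u => exists x a, inI2 Z a /\ u = tVI x a) w ->
     inUps3 Z (w *m mxI (q%:M - R) *m Imx (q%:M - R) - q *: w)) ->
  forall x y : 'rV[k]_3,
    let Y := q%:M - R in
    let Y' := q%:M - (Z *t Z) *m R *m (invmx Z *t invmx Z) in
    forall u v : 'rV[k]_3,
      wedge1 (ell Z om Y x y) (ell Z om Y' x y) u v =
      wedge1 (ell Z om Y x x) (ell Z om Y' y y) u v.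
Proof.
move=> Zu _ _ _ HI _ _ _ Hyp x y Y Y' u v.
set om0 := om (e k 0) (e k 1) (e k 2).
have inY : forall s : 'rV[k]_9, inI2 Z (s *m Y).
  move=> s; apply/HI; rewrite /Y -opprB mulmxN -mulNmx; exact: submxMl.
have imY : forall s : 'rV[k]_9, (s *m Y <= B2 Z)%MS.
  by move=> s; apply: (I2_B2 Zu); apply: inY.
have imY' : forall s : 'rV[k]_9, (s *m Y' <= B2 Z)%MS.
  move=> s; rewrite /Y' (Yconj Zu) mulmxA; apply: (B2_closed Zu); rewrite mulmxA; exact: imY.
have ellY : forall a b c, ell Z om Y a b c = om0 * Om a ((b *t c) *m At Z Y).
  by move=> a b c; apply: (ell_At Zu).
have ellY' : forall a b c, ell Z om Y' a b c = om0 * Om a ((b *t c) *m Bt Z Y).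
  by move=> a b c; rewrite (ell_At Zu) // /Y' (Yconj Zu) At_conj.
rewrite /wedge1 !ellY !ellY'.
set w := tVI (y *m Z *m Z) (bw2 Z v u).
have Hw : inspan (fun u0 => exists x0 a, inI2 Z a /\ u0 = tVI x0 a) w.
  move=> U HU; apply: HU; exists (y *m Z *m Z), (bw2 Z v u); split => //.
  by move=> U' HU'; apply: HU'; exists v, u.
have [HA HB] := Ups_alt Zu (Hyp w Hw).
have E := Psi_alt x y HA HB.
rewrite -/Y (Hg3 Zu) /w (wg3 Zu) tensBr mulmxBl mulmxBl -!tensA_rv !tm93 !mulmx1 in E.
have altP : forall c : 'rV[k]_3, alt9 ((y *t c) *m Bt Z Y).
  by move=> c; rewrite /Bt !mulmxA; apply: (I2_alt2 Zu); apply: inY.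
rewrite !PsiB PsiZ !PsiP // !tensA_rv -tensBr Psi_tens in E.
apply/eqP; rewrite -subr_eq0; apply/eqP.
rewrite -(mulr0 (- om0 ^+ 2)) -E.
ring.
Qed.
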